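(* There is no deterministic online algorithm with competitive ratio $o(n)$ for the degree-bounded group Steiner tree problem, where $n$ is the number of vertices. That is, for every deterministic online algorithm $\mathcal{A}$ and every function $f$ with $f(n)=o(n)$, there exist an instance on some number $n$ of vertices and a sequence of demand groups such that the maximum degree of $\mathcal{A}$'s final subgraph exceeds $f(n)\cdot\mathrm{OPT}$.
   Context: Online degree-bounded group Steiner tree: an undirected graph $G$ with a root vertex is given in advance; demands are subsets (groups) of vertices arriving one by one, and after each arrival the online algorithm must add edges (never removing any) so that for every group seen so far, at least one vertex of the group is connected to the root. The objective is to minimize the maximum vertex degree of the final subgraph; $\mathrm{OPT}$ is the minimum maximum degree of a subgraph in which every demand group has a vertex connected to the root. The competitive ratio is the worst-case ratio of the algorithm's maximum degree to $\mathrm{OPT}$. *)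

(* Defs.v *)
From HB Require Import structures.
From mathcomp Require Import all_boot all_order all_algebra.
From mathcomp Require Import reals.
Set Implicit Arguments. Unset Strict Implicit. Unset Printing Implicit Defensive.
Import Order.TTheory GRing.Theory Num.Theory.

(* Vertices of an n-vertex graph are 'I_n; an (undirected, simple) edge is a
   2-element vertex set; a (sub)graph is a set of edges. *)
Definition edge_set (n : nat) := {set {set 'I_n}}.

Definition simple_graph n (G : edge_set n) : bool := [forall e in G, #|e| == 2].

Definition adj n (H : edge_set n) : rel 'I_n := fun u v => [set u; v] \in H.

Definition deg n (H : edge_set n) (v : 'I_n) : nat := #|[set e in H | v \in e]|.
Definition maxdeg n (H : edge_set n) : nat := \max_(v : 'I_n) deg H v.

Definition feasible n (H : edge_set n) (r : 'I_n) (s : seq {set 'I_n}) : bool :=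
  all (fun g : {set 'I_n} => [exists v in g, connect (adj H) r v]) s.

(* OPT: minimum maximum degree of a feasible subgraph of G (the default value n
   is never attained when a feasible subgraph exists, since degrees are < n). *)
Definition opt n (G : edge_set n) (r : 'I_n) (s : seq {set 'I_n}) : nat :=
  \big[minn/n]_(H : edge_set n | (H \subset G) && feasible H r s) maxdeg H.

(* A deterministic online algorithm: given the graph G and root r (known in
   advance) and the demand groups arrived so far (the last one being the new
   arrival), it returns the set of edges it adds at this step.  Being a
   function of the prefix only, it is automatically online and deterministic. *)
Definition online_alg :=
  forall n : nat, edge_set n -> 'I_n -> seq {set 'I_n} -> edge_set n.

Definition alg_out (A : online_alg) n (G : edge_set n) (r : 'I_n)
  (s : seq {set 'I_n}) : edge_set n :=
  \bigcup_(i < size s) A n G r (take i.+1 s).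

Definition valid_alg (A : online_alg) : Prop :=
  forall n (G : edge_set n) (r : 'I_n) (s : seq {set 'I_n}),
    simple_graph G -> feasible G r s ->
    forall k, k <= size s ->
      (alg_out A G r (take k s) \subset G) && feasible (alg_out A G r (take k s)) r (take k s).

Definition little_o_n (R : realType) (f : nat -> R) : Prop :=
  (forall eps : R, 0 < eps -> exists N : nat, forall n : nat, (N <= n)%N ->
     `|f n| <= eps * n%:R)%R.

(* Main.v *)
Require Import Defs.
From HB Require Import structures.
From mathcomp Require Import all_boot all_order all_algebra.
From mathcomp Require Import reals.
From mathcomp Require Import lra zify.
Import Order.TTheory GRing.Theory Num.Theory.

Definition star {n} (r : 'I_n) : edge_set n :=
  [set e : {set 'I_n} | [exists j, (j != r) && (e == [set r; j])]].

Lemma star_simple n (r : 'I_n) : simple_graph (star r).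
Proof.
apply/forallP => e; apply/implyP; rewrite inE => /existsP [j /andP [jr /eqP ->]].
by rewrite cards2 (eq_sym r) jr.
Qed.

Lemma alg_out_rcons (A : online_alg) n (G : edge_set n) r s x :
  alg_out A G r (rcons s x) = alg_out A G r s :|: A n G r (rcons s x).
Proof.
rewrite /alg_out size_rcons big_ord_recr /=; congr (_ :|: _).
  apply: eq_bigr => i _; rewrite -cats1 takel_cat //; exact: ltn_ord.
by rewrite take_oversize // size_rcons.
Qed.

Lemma star_conn n (r : 'I_n) (H : edge_set n) v :
  H \subset star r -> connect (adj H) r v -> v != r -> [set r; v] \in H.
Proof.
move=> sH /connectP [p pp ->]; move: pp; case/lastP: p => [|p y]; first by rewrite /= eqxx.
rewrite last_rcons rcons_path => /andP [_ ] hz yr.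
have := subsetP sH _ hz; rewrite inE => /existsP [j /andP [_ /eqP E]].
have : y \in [set r; j] by rewrite -E !inE eqxx orbT.
rewrite !inE (negbTE yr) /= => /eqP yj.
by rewrite yj -E.
Qed.

Definition Kset (A : online_alg) {n} (r : 'I_n) s :=
  [set j | (j != r) && ([set r; j] \in alg_out A (star r) r s)].
Definition Uset (A : online_alg) {n} (r : 'I_n) s :=
  [set j | (j != r) && ([set r; j] \notin alg_out A (star r) r s)].

Lemma pair_inj n (r a b : 'I_n) : [set r; a] = [set r; b] -> a = b.
Proof.
move=> E.
have hb : b \in [set r; a] by rewrite E !inE eqxx orbT.
have ha : a \in [set r; b] by rewrite -E !inE eqxx orbT.
move: ha hb; rewrite !inE => /orP [/eqP ar|/eqP //] /orP [/eqP br|/eqP //].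
by rewrite ar br.
Qed.

Lemma invariant (A : online_alg) (vA : valid_alg A) n (r : 'I_n) D
  (hD : D < n.-1) (j0 : 'I_n) (j0r : j0 != r) :
  forall t, t <= D -> exists s, [/\ feasible (star r) r s,
     exists2 j, j != r & all (fun g : {set 'I_n} => j \in g) s,
     (forall g, g \in s -> Uset A r s \subset g) & t <= #|Kset A r s| ].
Proof.
elim=> [_|t IH tD].
  by exists [::]; split => //; exists j0.
have [s [fs [j jr ja] J ts]] := IH (ltnW tD).
case: (ltnP t #|Kset A r s|) => h.
  by exists s; split => //; exists j.
case: (set_0Vmem (Uset A r s)) => [U0 | [u uU]].
  have : [set~ r] \subset Kset A r s.
    apply/subsetP => x; rewrite !inE => xr.
    have : x \notin Uset A r s by rewrite U0 inE.
    by rewrite inE xr /= negbK.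
  move/subset_leq_card; rewrite cardsC1 card_ord => hc.
  by move: (leq_trans hc h) tD hD; lia.
set s' := rcons s (Uset A r s).
have fs' : feasible (star r) r s'.
  rewrite /feasible all_rcons; apply/andP; split => //.
  apply/existsP; exists u; rewrite uU /=; apply: connect1.
  rewrite /adj inE; apply/existsP; exists u.
  by move: uU; rewrite inE => /andP [-> _] /=.
have := vA n (star r) r s' (star_simple _ r) fs' (size s') (leqnn _).
rewrite take_size => /andP [sub fe].
move: fe; rewrite /feasible all_rcons => /andP [/existsP [v /andP [vU cv]] _].
have vr : v != r by move: vU; rewrite inE => /andP [].
have vin := @star_conn n r _ v sub cv vr.
have mono : alg_out A (star r) r s \subset alg_out A (star r) r s'.
  by rewrite /s' alg_out_rcons subsetUl.
have UU : Uset A r s' \subset Uset A r s.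
  apply/subsetP => x; rewrite !inE => /andP [-> /=]; apply: contra.
  exact: (subsetP mono).
exists s'; split => //.
- exists u; first by move: uU; rewrite inE => /andP [].
  rewrite all_rcons uU /=; apply/allP => g gs; exact: (subsetP (J g gs)).
- move=> g; rewrite mem_rcons in_cons => /orP [/eqP -> // | gs].
  exact: subset_trans UU (J g gs).
- apply: (leq_ltn_trans ts); apply: proper_card.
  apply/properP; split.
    apply/subsetP => x; rewrite !inE => /andP [-> /=]; exact: (subsetP mono).
  exists v; first by rewrite inE vr vin.
  by move: vU; rewrite !inE => /andP [_ /negbTE ->]; rewrite andbF.
Qed.

Lemma bigmin_le (T : eqType) (l : seq T) (P : pred T) (F : T -> nat) x i0 :
  i0 \in l -> P i0 -> \big[minn/x]_(i <- l | P i) F i <= F i0.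
Proof.
elim: l => // a l IH; rewrite in_cons big_cons => /orP [/eqP <-|il] Pi.
  by rewrite Pi geq_minl.
case: (P a); last exact: IH.
by rewrite geq_min IH ?orbT.
Qed.

Lemma opt_le1 n (r j : 'I_n) (s : seq {set 'I_n}) :
  j != r -> all (fun g : {set 'I_n} => j \in g) s -> opt (star r) r s <= 1.
Proof.
move=> jr ja.
pose H0 : edge_set n := [set [set r; j]].
have P0 : (H0 \subset star r) && feasible H0 r s.
  apply/andP; split.
    by rewrite sub1set inE; apply/existsP; exists j; rewrite jr eqxx.
  apply/allP => g gs; apply/existsP; exists j.
  rewrite (allP ja g gs) /=; apply: connect1; by rewrite /adj inE.
apply: leq_trans (_ : maxdeg H0 <= 1).
  by rewrite /opt; apply: bigmin_le => //; rewrite mem_index_enum.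
apply/bigmax_leqP => v _; rewrite /deg.
apply: leq_trans (subset_leq_card (_ : _ \subset H0)) _; last by rewrite cards1.
by apply/subsetP => e; rewrite inE => /andP [].
Qed.

Lemma K_le_maxdeg (A : online_alg) n (r : 'I_n) s :
  #|Kset A r s| <= maxdeg (alg_out A (star r) r s).
Proof.
apply: leq_trans (leq_bigmax r); rewrite /deg.
rewrite -(card_imset _ (@pair_inj n r)).
apply: subset_leq_card; apply/subsetP => e /imsetP [j]; rewrite inE => /andP [_ ji] ->.
by rewrite inE ji !inE eqxx.
Qed.

Theorem theorem4 (R : realType) (A : online_alg) (f : nat -> R) :
  valid_alg A -> little_o_n f ->
  exists (n : nat) (G : edge_set n) (r : 'I_n) (s : seq {set 'I_n}),
    [/\ simple_graph G, feasible G r s &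
        (f n * (opt G r s)%:R < (maxdeg (alg_out A G r s))%:R)%R].
Proof.
move=> vA fo.
have [N HN] := fo (1/2)%R ltac:(lra).
pose r := (@ord0 N.+4).
pose j0 := (@ord_max N.+4).
have j0r : j0 != r by [].
have [s [fs [j jr ja] _ ts]] :=
  @invariant A vA (N.+4.+1) r (N.+3) (leqnn _) j0 j0r (N.+3) (leqnn _).
exists (N.+4.+1), (star r), r, s; split => //.
  exact: star_simple.
have ho := @opt_le1 _ r j s jr ja.
have hd := leq_trans ts (@K_le_maxdeg A _ r s).
have hf := HN (N.+4.+1) (leqW (leqW (leqW (leqW (leqW (leqnn N)))))).
have hd' : ((N.+3)%:R <= (maxdeg (alg_out A (star r) r s))%:R :> R)%R by rewrite ler_nat.
have e5 : ((N.+4.+1)%:R = N%:R + 5 :> R)%R by rewrite !mulrSr; lra.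
have e3 : ((N.+3)%:R = N%:R + 3 :> R)%R by rewrite !mulrSr; lra.
have hN0 : (0 <= N%:R :> R)%R by rewrite ler0n.
have hfa : (f (N.+4.+1) <= `|f (N.+4.+1)|)%R by exact: ler_norm.
move: ho; case: (opt (star r) r s) => [|[|//]] _.
  rewrite mulr0; lra.
rewrite mulr1; lra.
Qed.
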